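(* Let $N\ge 1$ and consider a network with feature tensors $X_0,X_1,\dots,X_N$, where $X_L\in\mathbb{R}^{K\times \mathrm{rows}_L\times \mathrm{cols}_L}$, defined for $L=1,\dots,N$ by $$U_L=\mathrm{ReLU}\Big(\big(1-\tfrac1L\big)X_{L-1}+\tfrac1L\tanh\big(F_L(X_{L-1})\big)\Big),\qquad X_L=M_L(U_L),$$ where each $F_L:\mathbb{R}^{K\times\mathrm{rows}_{L-1}\times\mathrm{cols}_{L-1}}\to\mathbb{R}^{K\times\mathrm{rows}_{L-1}\times\mathrm{cols}_{L-1}}$ is an arbitrary map, $\mathrm{ReLU},\tanh$ act entrywise, and each $M_L$ is either the identity or a non-overlapping (stride = kernel) spatial max pooling, channelwise. Assume $\mathrm{rows}_T$ divides $\mathrm{rows}_L$ and $\mathrm{cols}_T$ divides $\mathrm{cols}_L$ whenever $L\le T$. For $0\le L\le T\le N$ define rescaled maps $S^{(T)}_0=0$ and, for $L\ge1$, $$S^{(T)}_L=\frac{L}{N}\,\mathrm{Pool}(X_L,T),\qquad \mathrm{Pool}(X_L,T)=\mathrm{MaxPool}\Big(X_L,\ \mathrm{ker}=\big(\tfrac{\mathrm{rows}_L}{\mathrm{rows}_T},\tfrac{\mathrm{cols}_L}{\mathrm{cols}_T}\big)\Big)$$ (non-overlapping, channelwise). Then (bounded increment through depth) for every target layer $T$ with $1\le T\le N$, every $1\le L\le T$, every channel $k$ and every position $(x,y)$, $$\Big|S^{(T)}_{L,k}(x,y)-S^{(T)}_{L-1,k}(x,y)\Big|\le \delta,\qquad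 \delta=\frac1N.$$
   Context: This is the ''feature-aligned'' CNN with dampened skip connections: layer $L$ mixes the previous features with weight $1-\beta$ and a $\tanh$-bounded block output with weight $\beta=1/L$, followed by ReLU and optionally max pooling. $N$ is the total number of layers (denoted $N_L$ in the paper). All feature tensors have the same number $K$ of channels; $X_0$ is an arbitrary real tensor (the projected input). *)

(* Defs.v *)
From mathcomp Require Import all_boot all_order all_algebra.
From mathcomp Require Import reals.
From mathcomp.analysis Require Import sequences exp.
Set Implicit Arguments. Unset Strict Implicit. Unset Printing Implicit Defensive.
Import Order.TTheory GRing.Theory Num.Theory.
Local Open Scope ring_scope.

Definition tensor (R : Type) (K r c : nat) := 'I_K -> 'I_r -> 'I_c -> R.

Section Defs.
Variable R : realType.

Definition relu (x : R) : R := Num.max 0 x.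

Definition tanh (x : R) : R := (expR x - expR (- x)) / (expR x + expR (- x)).

(* Maximum of a finite list of reals (the head is used as neutral element,
   so for a nonempty list this is exactly its maximum). *)
Definition seqmax (s : seq R) : R := \big[Num.max/head 0 s]_(v <- s) v.

Definition maxpool (K r c r' c' : nat) (X : tensor R K r c) : tensor R K r' c' :=
  fun k x y =>
    seqmax [seq X k ij.1 ij.2 | ij <- enum [pred ij : 'I_r * 'I_c |
               ((ij.1 %/ (r %/ r'))%N == x) && ((ij.2 %/ (c %/ c'))%N == y)]].

Definition layer_pre (K r c : nat) (L : nat) (F : tensor R K r c -> tensor R K r c)
  (Xprev : tensor R K r c) : tensor R K r c :=
  fun k i j => relu ((1 - L%:R^-1) * Xprev k i j + L%:R^-1 * tanh (F Xprev k i j)).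

Definition rescaled (K N : nat) (rows cols : nat -> nat)
  (X : forall L, tensor R K (rows L) (cols L)) (T L : nat) : tensor R K (rows T) (cols T) :=
  fun k x y =>
    if L == 0%N then 0
    else L%:R / N%:R * maxpool (X L) k x y.

End Defs.
Arguments rescaled {R K} N {rows cols} X T L _ _ _.

(* Main.v *)
Require Import Defs.
From mathcomp Require Import all_boot all_order all_algebra.
From mathcomp Require Import reals.
From mathcomp.analysis Require Import sequences exp.
From mathcomp Require Import lra.
Import Order.TTheory GRing.Theory Num.Theory.
Local Open Scope ring_scope.

Section L.
Variable R : realType.

Lemma bigmax_ge (idx v : R) (s : seq R) : v \in s -> v <= \big[Num.max/idx]_(u <- s) u.
Proof.
elim: s => // a s IH; rewrite in_cons big_cons => /orP[/eqP->|/IH h].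
  by rewrite le_max lexx.
by rewrite le_max h orbT.
Qed.

Lemma seqmax_ge (v : R) s : v \in s -> v <= seqmax s.
Proof. exact: bigmax_ge. Qed.

Lemma seqmax_le (s : seq R) c : 0 <= c -> (forall v, v \in s -> v <= c) -> seqmax s <= c.
Proof.
move=> c0 h; rewrite /seqmax big_seq; apply: (big_ind (fun x => x <= c)).
- by case: s h => //= a s h; apply: h; rewrite in_cons eqxx.
- by move=> x y hx hy; rewrite ge_max hx hy.
- by move=> i hi; apply: h.
Qed.

Lemma seqmax_ge0 (s : seq R) : (forall v, v \in s -> 0 <= v) -> 0 <= seqmax s.
Proof.
move=> h; rewrite /seqmax big_seq; apply: (big_ind (fun x => 0 <= x)).
- by case: s h => //= a s h; apply: h; rewrite in_cons eqxx.
- by move=> x y hx hy; rewrite le_max hx.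
- by move=> i hi; apply: h.
Qed.

Lemma maxpool_le K r c r' c' (X : tensor R K r c) k (x : 'I_r') (y : 'I_c') b :
  0 <= b -> (forall (i : 'I_r) (j : 'I_c), (i %/ (r %/ r'))%N = x -> (j %/ (c %/ c'))%N = y ->
     X k i j <= b) -> @maxpool R K r c r' c' X k x y <= b.
Proof.
move=> b0 h; apply: seqmax_le => // v /mapP[[i j]]; rewrite mem_enum inE /= => /andP[/eqP hi /eqP hj] ->.
exact: h.
Qed.

Lemma maxpool_ge K r c r' c' (X : tensor R K r c) k (x : 'I_r') (y : 'I_c') (i : 'I_r) (j : 'I_c) :
  (i %/ (r %/ r'))%N = x -> (j %/ (c %/ c'))%N = y -> X k i j <= @maxpool R K r c r' c' X k x y.
Proof.
move=> hi hj; apply: seqmax_ge; apply/mapP; exists (i, j) => //.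
by rewrite mem_enum inE /= hi hj !eqxx.
Qed.

Lemma maxpool_ge0 K r c r' c' (X : tensor R K r c) k (x : 'I_r') (y : 'I_c') :
  (forall i j, 0 <= X k i j) -> 0 <= @maxpool R K r c r' c' X k x y.
Proof. move=> h; apply: seqmax_ge0 => v /mapP[ij _ ->]; exact: h. Qed.

Lemma tanh_bound (t : R) : -1 <= tanh t <= 1.
Proof.
rewrite /tanh; have hp : 0 < expR t + expR (- t) by rewrite addr_gt0 ?expR_gt0.
rewrite ler_pdivlMr // ler_pdivrMr // !mulN1r mul1r.
have := expR_gt0 t; have := expR_gt0 (- t).
move=> h1 h2; apply/andP; split; lra.
Qed.

Lemma relu_ge0 (z : R) : 0 <= relu z.
Proof. by rewrite /relu le_max lexx. Qed.

Lemma layer_eq (m : nat) (y t : R) :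
  m.+1%:R * ((1 - m.+1%:R^-1) * y + m.+1%:R^-1 * t) = m%:R * y + t.
Proof.
have h : m.+1%:R != 0 :> R by rewrite pnatr_eq0.
rewrite mulrDr mulrA mulrBr mulr1 mulfV // mulrA mulfV // mul1r -natr1 addrK.
by [].
Qed.

Lemma layer_up K r c (m : nat) (G : tensor R K r c -> tensor R K r c)
  (Y : tensor R K r c) k i j : 0 <= m%:R * Y k i j ->
  m.+1%:R * layer_pre m.+1 G Y k i j <= m%:R * Y k i j + 1.
Proof.
move=> h; rewrite /layer_pre /relu.
have [t1 t2] := andP (tanh_bound (G Y k i j)).
rewrite maxr_pMr // mulr0 layer_eq.
rewrite ge_max; apply/andP; split; lra.
Qed.

Lemma layer_lo K r c (m : nat) (G : tensor R K r c -> tensor R K r c)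
  (Y : tensor R K r c) k i j :
  m%:R * Y k i j - 1 <= m.+1%:R * layer_pre m.+1 G Y k i j.
Proof.
rewrite /layer_pre /relu.
have [t1 t2] := andP (tanh_bound (G Y k i j)).
rewrite maxr_pMr // mulr0 layer_eq le_max; apply/orP; right; lra.
Qed.
End L.


Lemma blk (p q t : nat) : (0 < t)%N -> (t %| q)%N -> (q %| p)%N ->
  forall i, (i %/ (p %/ q) %/ (q %/ t))%N = (i %/ (p %/ t))%N.
Proof.
move=> t0 htq hqp i; rewrite -divnMA; congr (_ %/ _)%N.
by rewrite muln_divA // divnK.
Qed.

Lemma blk_lt (p q i : nat) : (q %| p)%N -> (i < p)%N -> (i %/ (p %/ q) < q)%N.
Proof.
move=> hqp hi; have hp : (0 < p)%N := leq_ltn_trans (leq0n i) hi.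
have hq : (0 < q)%N.
  case: q hqp => [|q] //; rewrite dvd0n => /eqP h; by rewrite h in hp.
have hd : (0 < p %/ q)%N by rewrite divn_gt0 // dvdn_leq.
by rewrite ltn_divLR // mulnC divnK.
Qed.

Theorem theorem2 (R : realType) (N K : nat) (rows cols : nat -> nat)
  (X : forall L : nat, tensor R K (rows L) (cols L))
  (F : forall L : nat, tensor R K (rows L.-1) (cols L.-1) -> tensor R K (rows L.-1) (cols L.-1))
  (hN : (1 <= N)%N)
  (hpos : forall L, (L <= N)%N -> (0 < rows L)%N /\ (0 < cols L)%N)
  (hdiv : forall L T, (L <= T)%N -> (T <= N)%N ->
            (rows T %| rows L)%N /\ (cols T %| cols L)%N)
  (hX : forall L, (1 <= L)%N -> (L <= N)%N ->
          X L = maxpool (layer_pre L (F L) (X L.-1))) :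
  forall T, (1 <= T)%N -> (T <= N)%N ->
  forall L, (1 <= L)%N -> (L <= T)%N ->
  forall (k : 'I_K) (x : 'I_(rows T)) (y : 'I_(cols T)),
    `| rescaled N X T L k x y - rescaled N X T L.-1 k x y | <= N%:R^-1.
Proof.
move=> T hT1 hTN L hL1 hLT k x y.
have hLN : (L <= N)%N by apply: leq_trans hLT hTN.
have XE : forall L', (1 <= L')%N -> (L' <= N)%N -> forall k i j,
    X L' k i j = maxpool (layer_pre L' (F L') (X L'.-1)) k i j.
  by move=> L' h1 h2 k' i j; rewrite (hX L' h1 h2).
have Xge0 : forall L', (1 <= L')%N -> (L' <= N)%N -> forall k i j, 0 <= X L' k i j.
  move=> L' h1 h2 k' i j; rewrite XE //; apply: maxpool_ge0 => i' j'.
  exact: relu_ge0.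
have hNr : 0 < N%:R :> R by rewrite ltr0n.
have A0 : 0 <= maxpool (X L) k x y by apply: maxpool_ge0; exact: Xge0.
rewrite /rescaled.
case: L hL1 hLT hLN XE Xge0 A0 => // m _ hLT hLN XE Xge0 A0 /=.
have fin : forall A B : R, m.+1%:R * A <= m%:R * B + 1 -> m%:R * B <= m.+1%:R * A + 1 ->
   `| m.+1%:R / N%:R * A - m%:R / N%:R * B | <= N%:R^-1.
  move=> A B up lo.
  have -> : m.+1%:R / N%:R * A - m%:R / N%:R * B = (m.+1%:R * A - m%:R * B) * N%:R^-1.
    by rewrite mulrBl mulrAC [m%:R * _ * _]mulrAC.
  rewrite normrM [`|N%:R^-1|]ger0_norm ?invr_ge0 ?ler0n //.
  rewrite -[X in _ <= X]mul1r; apply: ler_wpM2r; first by rewrite invr_ge0 ler0n.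
  rewrite ler_norml; apply/andP; split; lra.
case: m hLT hLN XE Xge0 A0 fin => [|m] hLT hLN XE Xge0 A0 fin /=.
  have := fin (maxpool (X 1%N) k x y) 0; rewrite !mulr0 subr0 => h; apply: h; last first.
    by rewrite mul1r; lra.
  rewrite mul1r add0r; apply: maxpool_le => // i' j' _ _.
  rewrite XE //; apply: maxpool_le => // i j _ _.
  have := @layer_up _ _ _ _ 0 (F 1%N) (X 0%N) k i j; rewrite !mul0r add0r mul1r; apply.
  exact: lexx.
have [rT cT] := hpos T hTN.
have [d1 e1] := hdiv m.+2 T hLT hTN.
have [d2 e2] := hdiv m.+1 m.+2 (leqnSn _) hLN.
have hL1N : (m.+1 <= N)%N by apply: ltnW.
have B0 : 0 <= maxpool (X m.+1) k x y by apply: maxpool_ge0; exact: Xge0.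
have hm1 : 0 < m.+1%:R :> R by rewrite ltr0n.
have hm2 : 0 < m.+2%:R :> R by rewrite ltr0n.
apply: fin.
- rewrite mulrC -ler_pdivlMr //.
  apply: maxpool_le; first by apply: divr_ge0; [apply: addr_ge0 => //; apply: mulr_ge0 | apply: ltW].
  move=> i' j' hi' hj'; rewrite XE //; apply: maxpool_le.
    by apply: divr_ge0; [apply: addr_ge0 => //; apply: mulr_ge0 | apply: ltW].
  move=> i j hi hj; rewrite ler_pdivlMr // mulrC.
  have hu := @layer_up R K _ _ m.+1 (F m.+2) (X m.+1) k i j.
  apply: le_trans (hu _) _; first by apply: mulr_ge0 => //; apply: Xge0.
  rewrite lerD2r; apply: ler_wpM2l; first by rewrite ler0n.
  apply: maxpool_ge.
    by rewrite -(@blk _ _ _ rT d1 d2) /= hi hi'.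
  by rewrite -(@blk _ _ _ cT e1 e2) /= hj hj'.
- rewrite mulrC -ler_pdivlMr //.
  apply: maxpool_le; first by apply: divr_ge0; [apply: addr_ge0 => //; apply: mulr_ge0 | apply: ltW].
  move=> i j hi hj; rewrite ler_pdivlMr // mulrC.
  have hl := @layer_lo R K _ _ m.+1 (F m.+2) (X m.+1) k i j.
  rewrite -lerBlDr; apply: le_trans hl _.
  apply: ler_wpM2l; first by rewrite ler0n.
  pose i' := Ordinal (@blk_lt _ _ _ d2 (ltn_ord i)).
  pose j' := Ordinal (@blk_lt _ _ _ e2 (ltn_ord j)).
  apply: (@le_trans _ _ (X m.+2 k i' j')).
    by rewrite XE //; apply: maxpool_ge.
  apply: maxpool_ge.
    by rewrite /= (@blk _ _ _ rT d1 d2).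
  by rewrite /= (@blk _ _ _ cT e1 e2).
Qed.
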